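(* Let $\mathcal C$ be a small cancellative category (all morphisms are monomorphisms and epimorphisms). If $\mathcal C$ contains no nonidentity retractions, then for every morphism $\alpha$ of $\mathcal C$ the comma category $\mathfrak F\mathcal C/\alpha$ is a partially ordered set.
   Context: The factorization category $\mathfrak F\mathcal C$ has the morphisms of $\mathcal C$ as objects; for $\alpha:a\to b$ and $\beta:a'\to b'$, a morphism $\alpha\to\beta$ is a pair $(f,g)$ with $f:a'\to a$, $g:b\to b'$ and $g\circ\alpha\circ f=\beta$; composition of $(f_1,g_1):\alpha\to\beta$ and $(f_2,g_2):\beta\to\gamma$ is $(f_1\circ f_2,g_2\circ g_1)$. The comma category $\mathfrak F\mathcal C/\alpha$ has objects pairs $(\beta,\varphi)$ with $\varphi:\beta\to\alpha$ in $\mathfrak F\mathcal C$, and morphisms $\psi:\beta\to\beta'$ with $\varphi'\circ\psi=\varphi$. A retraction is a morphism $r$ for which there is $s$ with $r\circ s$ an identity. A small category is a partially ordered set if between any two objects there is at most one morphism and objects with morphisms in both directions coincide. *)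

(* Defs.v *)
Set Implicit Arguments.

Record Cat := {
  Ob : Type;
  Hom : Ob -> Ob -> Type;
  cid : forall a, Hom a a;
  comp : forall a b d, Hom b d -> Hom a b -> Hom a d;
  comp_assoc : forall a b c d (h : Hom c d) (g : Hom b c) (f : Hom a b),
      comp h (comp g f) = comp (comp h g) f;
  comp_id_l : forall a b (f : Hom a b), comp (cid b) f = f;
  comp_id_r : forall a b (f : Hom a b), comp f (cid a) = f
}.
Arguments cid {_} _.
Arguments comp {_ _ _ _} _ _.

Section Defs.
Variable C : Cat.

Definition monic {a b} (f : Hom C a b) : Prop :=
  forall x (g h : Hom C x a), comp f g = comp f h -> g = h.
Definition epic {a b} (f : Hom C a b) : Prop :=
  forall y (g h : Hom C b y), comp g f = comp h f -> g = h.

Definition cancellative : Prop :=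
  forall a b (f : Hom C a b), monic f /\ epic f.

Definition is_identity {a b} (r : Hom C a b) : Prop :=
  exists e : a = b, eq_rect a (fun x => Hom C a x) (cid a) b e = r.

Definition retraction {a b} (r : Hom C a b) : Prop :=
  exists s : Hom C b a, comp r s = cid b.

Definition no_nonidentity_retractions : Prop :=
  forall a b (r : Hom C a b), retraction r -> is_identity r.

Record FObj := { fsrc : Ob C; ftgt : Ob C; fmor : Hom C fsrc ftgt }.

Record FHom (x y : FObj) := {
  fh_f : Hom C (fsrc y) (fsrc x);
  fh_g : Hom C (ftgt x) (ftgt y);
  fh_eq : comp fh_g (comp (fmor x) fh_f) = fmor y
}.

Lemma fcomp_eq (x y z : FObj) (p : FHom x y) (q : FHom y z) :
  comp (comp (fh_g q) (fh_g p)) (comp (fmor x) (comp (fh_f p) (fh_f q))) = fmor z.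
Proof.
  destruct p as [f1 g1 e1], q as [f2 g2 e2]; simpl.
  rewrite <- e2, <- e1.
  rewrite !comp_assoc. reflexivity.
Qed.

Definition fcomp (x y z : FObj) (p : FHom x y) (q : FHom y z) : FHom x z :=
  {| fh_f := comp (fh_f p) (fh_f q); fh_g := comp (fh_g q) (fh_g p);
     fh_eq := fcomp_eq p q |}.

Record CommaObj (alpha : FObj) := { cdom : FObj; cmap : FHom cdom alpha }.

Record CommaHom (alpha : FObj) (X Y : CommaObj alpha) := {
  cpsi : FHom (cdom X) (cdom Y);
  ceq : fcomp cpsi (cmap Y) = cmap X
}.

End Defs.

Definition is_poset (O : Type) (H : O -> O -> Type) : Prop :=
  (forall x y (f g : H x y), f = g) /\ (forall x y, H x y -> H y x -> x = y).

(* Main.v *)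
Require Import Defs.
From Stdlib Require Import ProofIrrelevance.

Lemma FHom_ext (C : Cat) (x y : FObj C) (p q : FHom x y) :
  fh_f p = fh_f q -> fh_g p = fh_g q -> p = q.
Proof.
  destruct p as [f g e], q as [f' g' e']; simpl; intros H1 H2; subst.
  f_equal; apply proof_irrelevance.
Qed.

Theorem mainTheorem14 (C : Cat) :
  cancellative C -> no_nonidentity_retractions C ->
  forall (a b : Ob C) (alpha : Hom C a b),
    @is_poset (@CommaObj C {| fsrc := a; ftgt := b; fmor := alpha |})
             (@CommaHom C {| fsrc := a; ftgt := b; fmor := alpha |}).
Proof.
  intros Hc Hr a b alpha. split.
  - intros [[s1 t1 m1] [f g e]] [[s2 t2 m2] [f' g' e']] [p1 q1] [p2 q2].
    assert (Hf1 := f_equal (@fh_f _ _ _) q1). assert (Hg1 := f_equal (@fh_g _ _ _) q1).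
    assert (Hf2 := f_equal (@fh_f _ _ _) q2). assert (Hg2 := f_equal (@fh_g _ _ _) q2).
    simpl in *.
    assert (E : p1 = p2).
    { apply FHom_ext.
      - apply (proj2 (Hc _ _ f')). exact (eq_trans Hf1 (eq_sym Hf2)).
      - apply (proj1 (Hc _ _ g')). exact (eq_trans Hg1 (eq_sym Hg2)). }
    subst p2. f_equal. apply proof_irrelevance.
  - intros [[s1 t1 m1] [f g e]] [[s2 t2 m2] [f' g' e']] [[f1 g1 e1] q1] [[f2 g2 e2] q2].
    assert (Hf1 := f_equal (@fh_f _ _ _) q1). assert (Hg1 := f_equal (@fh_g _ _ _) q1).
    assert (Hf2 := f_equal (@fh_f _ _ _) q2). assert (Hg2 := f_equal (@fh_g _ _ _) q2).
    simpl in *. clear q1 q2.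
    assert (R1 : comp f1 f2 = cid s1).
    { apply (proj2 (Hc _ _ f)). rewrite <- comp_assoc, Hf2, Hf1, comp_id_l. reflexivity. }
    assert (R2 : comp g2 g1 = cid t1).
    { apply (proj1 (Hc _ _ g)). rewrite comp_assoc, Hg2, Hg1, comp_id_r. reflexivity. }
    destruct (Hr _ _ f1 (ex_intro _ f2 R1)) as [E1 H1].
    destruct (Hr _ _ g2 (ex_intro _ g1 R2)) as [E2 H2].
    destruct E1, E2. simpl in H1, H2. subst f1 g2.
    rewrite comp_id_l in R1. rewrite comp_id_l in R2. subst f2 g1.
    rewrite comp_id_r, comp_id_l in e1. subst m2.
    rewrite comp_id_l in Hf2. rewrite comp_id_r in Hg2. subst f' g'.
    f_equal. f_equal. apply proof_irrelevance.
Qed.
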